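(* Let $p$ be a prime, $G$ a finite group, and let $\chi\in\mathrm{Irr}(G)$ be such that $\chi(x)$ is a root of unity for every $p$-singular element $x\in G$. Then: (a) If $S$ is a Sylow $p$-subgroup of $G$, then $\chi(1)^2\equiv 1 \pmod{|S|}$. Hence, if $p$ is odd, then $\chi(1)\equiv\pm1\pmod{|S|}$; if $|S|=2^a$ with $a\ge 2$, then $\chi(1)\equiv \pm1 \pmod{2^a}$ or $\chi(1)\equiv 2^{a-1}\pm 1\pmod{2^a}$. In any case, $\chi(1)$ is not divisible by $p$. (b) If $M\trianglelefteq G$ has order divisible by $p$, then the restriction $\chi_M$ is a sum of distinct irreducible characters of $M$ (each with multiplicity one). In particular, if $\chi$ is non-linear and faithful, then $\mathbf{Z}(G)$ is a $p'$-group. (c) If $M$ is a subgroup of $G$ having a normal $p$-complement $N$ and a non-trivial Sylow $p$-subgroup $P$, then $$[\chi_M,\chi_M]=1+\frac{[\chi_N,\chi_N]-1}{|P|}.$$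
   Context: $\mathrm{Irr}(G)$ denotes the set of irreducible complex characters of $G$. An element is $p$-singular if its order is divisible by $p$. $\chi_M$ denotes restriction of $\chi$ to $M$, and $[\alpha,\beta]=\frac{1}{|H|}\sum_{h\in H}\alpha(h)\overline{\beta(h)}$ is the usual inner product of class functions on a group $H$. $\mathbf{Z}(G)$ is the center of $G$; a $p'$-group is a group of order prime to $p$. A normal $p$-complement of $M$ is a normal subgroup of $M$ of order prime to $p$ and index a power of $p$. *)

(* Defs.v *)
From mathcomp Require Import all_boot all_order all_algebra all_fingroup all_solvable all_field all_character.
Set Implicit Arguments. Unset Strict Implicit. Unset Printing Implicit Defensive.
Import GRing.Theory Num.Theory.

(* The degree chi(1) of a character, as a natural number (chi(1) is a natural
   number for every character, so truncn is exact). *)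
Definition cfdeg (gT : finGroupType) (G : {group gT}) (chi : 'CF(G)) : nat :=
  Num.truncn (chi 1%g).

(* Main.v *)
Require Import Defs.
From mathcomp Require Import all_boot all_order all_algebra all_fingroup all_solvable all_field all_character.
From mathcomp Require Import zify ring.
Import GRing.Theory Num.Theory.

Section NatHelpers.
Local Set Implicit Arguments.
Lemma sqmod_dvd (d c : nat) : 0 < c -> c ^ 2 = 1 %[mod d] -> d %| (c - 1) * (c + 1).
Proof.
move=> c0 /eqP; rewrite eqn_mod_dvd; last by rewrite expn_gt0 c0.
by have -> : (c - 1) * (c + 1) = c ^ 2 - 1 by nia.
Qed.

Lemma nt_odd (p a c : nat) : prime p -> odd p -> 0 < c -> c ^ 2 = 1 %[mod p ^ a] ->
  c = 1 %[mod p ^ a] \/ c + 1 = 0 %[mod p ^ a].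
Proof.
move=> pp op c0 /(@sqmod_dvd _ _ c0) hd.
have [pc|npc] := boolP (p %| c - 1).
  have npc1 : ~~ (p %| c + 1).
    apply/negP => pc1.
    have : p %| (c + 1) - (c - 1) by rewrite dvdn_sub.
    have -> : c + 1 - (c - 1) = 2 by lia.
    rewrite dvdn_prime2 //; move/eqP => p2; by rewrite p2 in op.
  move: hd; rewrite Gauss_dvdl; last by rewrite coprimeXl // prime_coprime.
  move=> hd; left; apply/eqP. rewrite eqn_mod_dvd. exact: hd. exact: c0.
move: hd; rewrite Gauss_dvdr; last by rewrite coprimeXl // prime_coprime.
by move=> hd; right; rewrite mod0n; apply/eqP; exact: hd.
Qed.

Lemma nt_two (b c : nat) : 0 < c -> c ^ 2 = 1 %[mod 2 ^ b.+2] ->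
  [\/ c = 1 %[mod 2 ^ b.+2], c + 1 = 0 %[mod 2 ^ b.+2],
      c = 2 ^ b.+1 + 1 %[mod 2 ^ b.+2] | c + 1 = 2 ^ b.+1 %[mod 2 ^ b.+2]].
Proof.
move=> c0 /(@sqmod_dvd _ _ c0) hd.
set q := 2 ^ b.
have e2 : 2 ^ b.+2 = 4 * q by rewrite !expnS /q; lia.
have e1 : 2 ^ b.+1 = 2 * q by rewrite !expnS /q; lia.
rewrite e1 e2 in hd *; have qe : q = 2 ^ b by []; clearbody q.
have oc : odd c.
  apply/negP => ec.
  have : 2 %| (c - 1) * (c + 1) by apply: dvdn_trans hd; rewrite dvdn_mulr.
  rewrite dvdn2 oddM.
  have -> : c + 1 = (c - 1).+2 by lia.
  have ec1 : c = (c - 1).+1 by lia.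
  have oc1 : odd c = ~~ odd (c - 1) by rewrite {1}ec1.
  move: ec; rewrite oc1 /=; case: (odd (c - 1)) => //.
have ec := odd_double_half c; rewrite oc /= -muln2 in ec.
set u := c./2 in ec; clearbody u.
have hu : q %| u * (u + 1).
  rewrite -(@dvdn_pmul2l 4) //.
  by have -> : 4 * (u * (u + 1)) = (c - 1) * (c + 1) by nia.
have [ou|eu] := boolP (odd u).
  move: hu; rewrite Gauss_dvdr; last by rewrite qe coprimeXl // coprime2n.
  case/dvdnP => k ek.
  have ek2 := odd_double_half k; rewrite -muln2 in ek2; set j := k./2 in ek2; clearbody j.
  case: (odd k) ek2 => /= ek2.
    constructor 4; rewrite (_ : c + 1 = j * (4 * q) + 2 * q) ?modnMDl //; clear -ec ek ek2; nia.
  constructor 2; rewrite (_ : c + 1 = j * (4 * q) + 0) ?modnMDl //; clear -ec ek ek2; nia.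
move: hu; rewrite Gauss_dvdl; last by rewrite qe coprimeXl // coprime2n addn1 /= eu.
case/dvdnP => k ek.
have ek2 := odd_double_half k; rewrite -muln2 in ek2; set j := k./2 in ek2; clearbody j.
case: (odd k) ek2 => /= ek2.
  constructor 3; rewrite (_ : c = j * (4 * q) + (2 * q + 1)) ?modnMDl //; clear -ec ek ek2; nia.
constructor 1; rewrite (_ : c = j * (4 * q) + 1) ?modnMDl //; clear -ec ek ek2; nia.
Qed.

End NatHelpers.

Local Open Scope group_scope.
Local Open Scope ring_scope.

Section Helpers.
Local Set Implicit Arguments.
Lemma norm_sum_split (gT : finGroupType) (G H K : {group gT}) (chi : 'CF(G)) :
  H \subset G -> K \subset H ->
  (forall x, x \in H -> x \notin K -> `|chi x| = 1) ->
  #|H|%:R * '['Res[H] chi] = #|K|%:R * '['Res[K] chi] + (#|H| - #|K|)%N%:R.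
Proof.
move=> sHG sKH n1.
have sKG := subset_trans sKH sHG.
rewrite !(cfnormE (cfun_onG _)) !mulrA !mulfV ?pnatr_eq0 -?lt0n ?cardG_gt0 // !mul1r.
rewrite (big_setID K) /= (setIidPr sKH); congr (_ + _).
  by apply: eq_bigr => x Kx; rewrite !cfResE // (subsetP sKH).
rewrite (eq_bigr (fun _ => 1)); last first.
  by move=> x /setDP[Hx Kx]; rewrite cfResE // n1 // expr1n.
by rewrite sumr_const cardsD (setIidPr sKH).
Qed.
Lemma norm_root1 (z : algC) n : (0 < n)%N -> z ^+ n = 1 -> `|z| = 1.
Proof.
move=> n0 zn; apply/eqP; rewrite -(pexpr_eq1 n0) ?normr_ge0 //.
by rewrite -normrX zn normr1.
Qed.

Lemma cfdeg_irrE (gT : finGroupType) (G : {group gT}) (i : Iirr G) :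
  'chi_i 1%g = (cfdeg 'chi_i)%:R.
Proof. by rewrite /cfdeg truncnK // Cnat_irr1. Qed.

Lemma pelt_sing (p : nat) (gT : finGroupType) (S : {group gT}) x :
  p.-group S -> x \in S -> x != 1%g -> (p %| #[x])%N.
Proof.
move=> pS Sx x1; apply/negPn/negP => np.
have px : p.-nat #[x] := pnat_dvd (order_dvdG Sx) pS.
have p'x : p^'.-nat #[x].
  by rewrite /pnat order_gt0 /=; apply/allP => q; rewrite mem_primes => /and3P[qp _ qd]; rewrite inE /=; apply: contra np => /eqnP <-.
by move: x1; rewrite -order_eq1 (pnat_1 px p'x).
Qed.

Lemma sq_mod (p : nat) (gT : finGroupType) (G S : {group gT}) (i : Iirr G) :
  (forall x, x \in G -> (p %| #[x]%g)%N ->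
     exists2 n : nat, (0 < n)%N & ('chi_i x) ^+ n = 1) ->
  S \subset G -> p.-group S ->
  (cfdeg 'chi_i ^ 2 = 1 %[mod #|S|])%N.
Proof.
move=> hyp sSG pS.
have n1 : forall x, x \in S -> x \notin (1%G : {group gT}) -> `|'chi_i x| = 1.
  move=> x Sx; rewrite inE => x1.
  have [n n0 hn] := hyp x (subsetP sSG x Sx) (@pelt_sing p gT S x pS Sx x1).
  exact: norm_root1 n0 hn.
have := @norm_sum_split _ G S 1%G 'chi_i sSG (sub1G S) n1.
have e1 : '['Res[1%G] 'chi_i] = ((cfdeg 'chi_i) ^ 2)%N%:R.
  rewrite (cfnormE (cfun_onG _)) cards1 invr1 mul1r.
  by rewrite big_set1 cfResE ?sub1G // cfdeg_irrE normr_nat -natrX.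
rewrite e1 cards1 mul1r -natrD.
have Nk : '['Res[S] 'chi_i] \in Num.nat by rewrite Cnat_cfdot_char ?cfRes_char ?irr_char.
rewrite -(truncnK Nk) -natrM => /eqP; rewrite eqr_nat => /eqP e.
have S0 := cardG_gt0 S.
set c := cfdeg _ in e *; set k := Num.truncn _ in e.
have c0 : (0 < c)%N by rewrite -(ltr0n algC) -cfdeg_irrE irr1_gt0.
have -> : (c ^ 2 = (k - 1) * #|S| + 1)%N by nia.
by rewrite modnMDl.
Qed.

Lemma mult1 (p : nat) (gT : finGroupType) (G M : {group gT}) (i : Iirr G) :
  prime p ->
  (forall x, x \in G -> (p %| #[x]%g)%N ->
     exists2 n : nat, (0 < n)%N & ('chi_i x) ^+ n = 1) ->
  M <| G -> (p %| #|M|)%N ->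
  forall j, j \in irr_constt ('Res[M] 'chi_i) -> '['Res[M] 'chi_i, 'chi_j] = 1.
Proof.
move=> pp hyp nMG pM j cj.
have sMG := normal_sub nMG.
have [y My oy] := Cauchy pp pM.
have [n n0 hn] := hyp y (subsetP sMG y My) (ltac:(by rewrite oy)).
have eRes := Clifford_Res_sum_cfclass nMG cj.
set e := '['Res[M] 'chi_i, 'chi_j] in eRes *.
have Ne : e \in Num.nat by rewrite Cnat_cfdot_char ?cfRes_char ?irr_char.
have e0 : e != 0 by rewrite -irr_consttE.
set s := (\sum_(chi <- _) chi) in eRes.
have As : s y \in Aint.
  rewrite /s reindex_cfclass // sum_cfunE rpred_sum // => k _.
  exact: Aint_irr.
have ey : 'chi_i y = e * s y by rewrite -(cfResE _ sMG My) eRes cfunE.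
have hs : s y ^+ n = (e ^+ n)^-1.
  by apply: (mulfI (expf_neq0 n e0)); rewrite -exprMn -ey hn divff // expf_neq0.
have Is : (e ^+ n)^-1 \in Num.int.
  apply: Cint_rat_Aint; first by rewrite rpredV rpredX // -(truncnK Ne) rpred_nat.
  by rewrite -hs rpredX.
have Nk : (e ^+ n)^-1 \in Num.nat.
  by rewrite natrEint Is invr_ge0 exprn_ge0 // natr_ge0.
have : ((Num.truncn e) ^ n * Num.truncn ((e ^+ n)^-1))%N%:R = 1 :> algC.
  by rewrite natrM natrX !truncnK // mulfV // expf_neq0.
move/eqP; rewrite pnatr_eq1 muln_eq1 => /andP[].
case: n n0 {hn hs Is Nk} => // n' _; rewrite expnS muln_eq1 => /andP[/eqP e1 _] _.
by rewrite -(truncnK Ne) e1.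
Qed.
End Helpers.

Theorem lemma2p3 (p : nat) (gT : finGroupType) (G : {group gT}) (i : Iirr G) :
  prime p ->
  (forall x, x \in G -> (p %| #[x]%g)%N ->
     exists2 n : nat, (0 < n)%N & ('chi_i x) ^+ n = 1) ->
  (* (a) *)
  (forall S : {group gT}, S \in 'Syl_p(G) ->
     [/\ (cfdeg 'chi_i ^ 2 = 1 %[mod #|S|])%N,
         odd p -> (cfdeg 'chi_i = 1 %[mod #|S|] \/ cfdeg 'chi_i + 1 = 0 %[mod #|S|])%N,
         forall a : nat, p = 2%N -> #|S| = (2 ^ a)%N -> (2 <= a)%N ->
           [\/ (cfdeg 'chi_i = 1 %[mod 2 ^ a])%N,
               (cfdeg 'chi_i + 1 = 0 %[mod 2 ^ a])%N,
               (cfdeg 'chi_i = 2 ^ a.-1 + 1 %[mod 2 ^ a])%N |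
               (cfdeg 'chi_i + 1 = 2 ^ a.-1 %[mod 2 ^ a])%N]
       & ~~ (p %| cfdeg 'chi_i)%N])
  /\
  (* (b) *)
  ((forall M : {group gT}, M <| G -> (p %| #|M|)%N ->
      'Res[M] 'chi_i = \sum_(j in irr_constt ('Res[M] 'chi_i)) 'chi_j)
   /\ (~~ ('chi_i \is a linear_char) -> cfaithful 'chi_i -> p^'.-group 'Z(G)))
  /\
  (* (c) *)
  (forall M N P : {group gT}, M \subset G -> N <| M -> p^'.-Hall(M) N ->
     P \in 'Syl_p(M) -> P :!=: 1%g ->
     '['Res[M] 'chi_i] = 1 + ('['Res[N] 'chi_i] - 1) / (#|P|%:R)).
Proof.
Proof.
move=> pp hyp.
have c0 : (0 < cfdeg 'chi_i)%N by rewrite -(ltr0n algC) -cfdeg_irrE irr1_gt0.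
split.
  move=> S; rewrite inE => sylS.
  have sSG := pHall_sub sylS; have pS := pHall_pgroup sylS.
  have sq := @sq_mod p gT G S i hyp sSG pS.
  have eS := card_pgroup pS.
  split.
  - exact: sq.
  - by move=> op; rewrite eS in sq *; exact: nt_odd pp op c0 sq.
  - move=> a p2 Sa a2; rewrite Sa in sq; case: a a2 Sa sq => [|[|b]] // _ _ sq /=.
    exact: nt_two c0 sq.
  - apply/negP => pc.
    have [S1|S1] := leqP #|S| 1.
      have : p^'.-nat #|G|.
        by rewrite -partn_eq1 ?cardG_gt0 // -(card_Hall sylS) eqn_leq S1 cardG_gt0.
      rewrite p'natE //; apply/negP/negPn; apply: dvdn_trans pc _.
      by have := dvd_irr1_cardG i; rewrite cfdeg_irrE dvdC_nat.
    rewrite cardG_gt1 in S1.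
    have [_ pS' _] := pgroup_pdiv pS S1.
    have := congr1 (modn^~ p) sq; rewrite /= !(modn_dvdm _ pS') (modn_small (prime_gt1 pp)).
    by rewrite (eqP (@dvdn_exp 2 _ _ isT pc)).
split; first split.
- move=> M nMG pM; rewrite {1}['Res[M] _]cfun_sum_constt; apply: eq_bigr => j cj.
  by rewrite (@mult1 p gT G M i pp hyp nMG pM j cj) scale1r.
- move=> nlin ff; rewrite /pgroup p'natE //; apply/negP => pZ.
  have nZG := center_normal G.
  have [lam lin_lam eR] := cfcenter_Res 'chi_i.
  have sZ : 'Z(G) \subset 'Z('chi_i)%CF by rewrite cfcenter_fful_irr.
  have {}eR : 'Res['Z(G)] 'chi_i = 'chi_i 1%g *: 'Res['Z(G)] lam.
    by rewrite -(cfResRes _ sZ (cfcenter_sub _)) eR linearZ.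
  have [k ek] : exists k, 'Res['Z(G)] lam = 'chi_k.
    by apply/irrP/lin_char_irr/cfRes_lin_char.
  have ck : k \in irr_constt ('Res['Z(G)] 'chi_i).
    by rewrite irr_consttE eR ek cfdotZl cfnorm_irr mulr1 irr1_neq0.
  have := @mult1 p gT G 'Z(G)%G i pp hyp nZG pZ k ck; rewrite eR ek cfdotZl cfnorm_irr mulr1 => h1.
  by move: nlin; rewrite qualifE/= irr_char h1 eqxx.
move=> M N P sMG nNM hallN sylP _.
rewrite inE in sylP.
have sNM := normal_sub nNM.
have n1 : forall x, x \in M -> x \notin N -> `|'chi_i x| = 1.
  move=> x Mx Nx; rewrite (mem_normal_Hall hallN nNM Mx) /p_elt p'natE // negbK in Nx.
  have [n n0 hn] := hyp x (subsetP sMG x Mx) Nx.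
  exact: norm_root1 n0 hn.
have e := @norm_sum_split gT G M N 'chi_i sMG sNM n1.
have cM : #|M| = (#|N| * #|P|)%N by rewrite (card_Hall hallN) (card_Hall sylP) mulnC partnC.
rewrite natrB ?subset_leq_card // cM natrM in e.
have n0 : #|N|%:R != 0 :> algC by rewrite pnatr_eq0 -lt0n cardG_gt0.
have q0 : #|P|%:R != 0 :> algC by rewrite pnatr_eq0 -lt0n cardG_gt0.
apply: (mulfI (mulf_neq0 n0 q0)); rewrite e.
by field.
Qed.
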